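(* Let $\lambda<\kappa$ be cardinals (with $\lambda\ge1$) and let $(S,\mu)$ be a multisemigroup with multiplicities bounded by $\kappa$. Let $\Phi_{\lambda,\kappa}:\mathrm{Card}_\kappa\to\mathrm{Card}_\lambda$ be defined by $\Phi_{\lambda,\kappa}(\nu)=\nu$ if $\nu\le\lambda$ and $\Phi_{\lambda,\kappa}(\nu)=\lambda$ otherwise. Then $(S,\Phi_{\lambda,\kappa}\circ\mu)$ (meaning $(s,t)\mapsto\Phi_{\lambda,\kappa}\circ\mu_{s,t}$) is a multisemigroup with multiplicities bounded by $\lambda$.
   Context: For a cardinal $\kappa\ge1$, $\mathrm{Card}_\kappa$ denotes the complete semiring of all cardinals $\le\kappa$, with sum of arbitrary families given by cardinal sum and product by cardinal product, every cardinal greater than $\kappa$ being identified with $\kappa$. $\mathcal{B}_\kappa(S)$ is the set of functions $S\to\mathrm{Card}_\kappa$. For a cardinal $\lambda'$ and $\nu\in\mathcal{B}_\kappa(S)$, $\lambda'\nu$ is the pointwise sum of $\lambda'$ copies of $\nu$. A multisemigroup with multiplicities bounded by $\kappa$ is a pair $(S,\mu)$, $S$ a non-empty set and $\mu:S\times S\to\mathcal{B}_\kappa(S)$, $(s,t)\mapsto\mu_{s,t}$, such that for all $r,s,t\in S$: $\sum_{i\in S}\mu_{s,t}(i)\mu_{r,i}=\sum_{j\in S}\mu_{r,s}(j)\mu_{j,t}$ (computed in $\mathcal{B}_\kappa(S)$). *)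

(* Defs.v *)
From HB Require Import structures.
From mathcomp Require Import all_boot all_order all_algebra.
From mathcomp Require Import boolp classical_sets functions cardinality.
Set Implicit Arguments. Unset Strict Implicit. Unset Printing Implicit Defensive.
Local Open Scope classical_set_scope.
Local Open Scope card_scope.

(* Cardinals are represented by sets A : set T (the cardinal |A|) over a fixed
   ambient type T; the cardinal kappa is represented by K : set T.
   A cardinal nu <= kappa is a set A with A #<= K. *)

(* Equality of (the images in Card_kappa of) two cardinals |X| and |Y|:
   every cardinal > kappa is identified with kappa, i.e. the truncation
   min(|X|, kappa) of both agree. *)
Definition card_eq_trunc (T U V : Type) (K : set T) (X : set U) (Y : set V) : Prop :=
  (K #<= X /\ K #<= Y) \/ X #= Y.

(* Left side of the associativity law at coordinate x:
   sum_{i in S} mu_{s,t}(i) * mu_{r,i}(x)   (cardinal sum of cardinal products) *)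
Definition mss_lhs (T S : Type) (mu : S -> S -> S -> set T) (r s t x : S) :=
  [set: {i : S & ({a : T | mu s t i a} * {b : T | mu r i x b})%type}].
Arguments mss_lhs {T S} mu r s t x.

Definition mss_rhs (T S : Type) (mu : S -> S -> S -> set T) (r s t x : S) :=
  [set: {j : S & ({a : T | mu r s j a} * {b : T | mu j t x b})%type}].
Arguments mss_rhs {T S} mu r s t x.

(* Computing the sums and
   products in true cardinal arithmetic and truncating at kappa at the end
   agrees with computing in Card_kappa, since truncation is a homomorphism. *)
Definition is_multisemigroup (T S : Type) (K : set T) (mu : S -> S -> S -> set T) : Prop :=
  inhabited S /\
  (forall s t x : S, mu s t x #<= K) /\
  (forall r s t x : S, card_eq_trunc K (mss_lhs mu r s t x) (mss_rhs mu r s t x)).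

Definition Phi (T : Type) (L A : set T) : set T :=
  if pselect (A #<= L) then A else L.

(* Main.v *)
Require Import Defs.
From HB Require Import structures.
From mathcomp Require Import all_boot all_order all_algebra.
From mathcomp Require Import boolp classical_sets functions cardinality.
From Stdlib Require Import Eqdep.
Local Open Scope classical_set_scope.
Local Open Scope card_scope.
Set Implicit Arguments.

Definition leT (X Y : Type) := exists f : X -> Y, injective f.
Definition eqT (X Y : Type) := exists f : X -> Y, injective f /\ (forall y, exists x, f x = y).
Definition truncT (L X Y : Type) := (leT L X /\ leT L Y) \/ eqT X Y.

Lemma leT_refl X : leT X X. Proof. by exists id. Qed.
Lemma leT_trans X Y Z : leT X Y -> leT Y Z -> leT X Z.
Proof. move=> [f fi] [g gi]; exists (g \o f) => x y /gi /fi //. Qed.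
Lemma eqT_refl X : eqT X X. Proof. by exists id; split=> // y; exists y. Qed.
Lemma eqT_trans X Y Z : eqT X Y -> eqT Y Z -> eqT X Z.
Proof.
move=> [f [fi fs]] [g [gi gs]]; exists (g \o f); split.
  by move=> x y /gi /fi.
move=> z; have [y <-] := gs z; have [x <-] := fs y; by exists x.
Qed.
Lemma eqT_sym X Y : eqT X Y -> eqT Y X.
Proof.
move=> [f [fi fs]].
exists (fun y => proj1_sig (cid (fs y))); split.
  move=> y1 y2 e.
  by rewrite -(proj2_sig (cid (fs y1))) -(proj2_sig (cid (fs y2))) e.
move=> x; exists (f x); apply: fi; exact: (proj2_sig (cid (fs (f x)))).
Qed.
Lemma eqT_le X Y : eqT X Y -> leT X Y.
Proof. by move=> [f [fi _]]; exists f. Qed.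

Lemma sig_inj T (P : T -> Prop) (u v : {x | P x}) : proj1_sig u = proj1_sig v -> u = v.
Proof. case: u v => x px [y py] /= e; subst y; congr exist; exact: Prop_irrelevance. Qed.

Lemma eqT_set_sig T (A : set T) : eqT (set_type A) {x | A x}.
Proof.
exists (fun z => exist _ (proj1_sig z) (set_mem (proj2_sig z))); split.
  by move=> u v /(congr1 (@proj1_sig _ _)) /= /sig_inj.
by move=> [y py]; exists (exist _ y (mem_set py)); apply: sig_inj.
Qed.

Lemma eqT_setT W : eqT (set_type [set: W]) W.
Proof.
exists (fun z => proj1_sig z); split; first by move=> u v /sig_inj.
by move=> y; exists (exist _ y (in_setT y)).
Qed.

Lemma card_le_leT T U (A : set T) (B : set U) : A #<= B <-> leT A B.
Proof.
split.
  move/card_leP/injfunPex => [f _ fi]; exists f => x y e.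
  by apply: fi => //; rewrite in_setT.
move=> [f fi]; apply/card_leP/injfunPex; exists f => //.
by move=> x y _ _ /fi.
Qed.

Lemma card_eq_eqT T U (A : set T) (B : set U) : A #= B <-> eqT A B.
Proof.
split.
  move/card_eqP/bijPex => [f [_ fi fs]]; exists f; split.
    by move=> x y e; apply: fi => //; rewrite in_setT.
  by move=> y; have [x _ <-] := fs y I; exists x.
move=> [f [fi fs]]; apply/card_eqP/bijPex; exists f; split => //.
  by move=> x y _ _ /fi.
by move=> y _; have [x <-] := fs y; exists x.
Qed.

Lemma leT_total (X Y : Type) : leT X Y \/ leT Y X.
Proof.
pose P (G : set (X * Y)) := forall p q, G p -> G q -> (p.1 = q.1 <-> p.2 = q.2).
have [G [PG Gmax]] : exists G, P G /\ forall B, G `<` B -> ~ P B.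
  apply: Zorn_bigcup => F FP Ftot p q [A FA Ap] [B FB Bq].
  have [AB|BA] := Ftot A B FA FB.
  - exact: (FP B FB p q (AB p Ap) Bq).
  - exact: (FP A FA p q Ap (BA q Bq)).
have [allx|/existsNP [x0 nx0]] := pselect (forall x, exists y, G (x, y)).
  left; exists (fun x => proj1_sig (cid (allx x))) => x1 x2 e.
  have h := PG _ _ (proj2_sig (cid (allx x1))) (proj2_sig (cid (allx x2))).
  by apply/h.
have [ally|/existsNP [y0 ny0]] := pselect (forall y, exists x, G (x, y)).
  right; exists (fun y => proj1_sig (cid (ally y))) => y1 y2 e.
  have h := PG _ _ (proj2_sig (cid (ally y1))) (proj2_sig (cid (ally y2))).
  by apply/h.
exfalso; apply: (Gmax (G `|` [set (x0, y0)])).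
  split; first by move=> p Gp; left.
  move=> H; apply: nx0; exists y0; exact: (H (x0, y0) (or_intror erefl)).
move=> [a b] [c d] [Gp|[-> ->]] [Gq|[-> ->]] //=.
- exact: PG Gp Gq.
- split=> e; exfalso; [apply: nx0; exists b | apply: ny0; exists a]; by rewrite -?e.
- split=> e; exfalso; [apply: nx0; exists d | apply: ny0; exists c]; by rewrite ?e.
Qed.

Lemma truncT_eqT L X Y X' Y' : truncT L X Y -> eqT X X' -> eqT Y Y' -> truncT L X' Y'.
Proof.
move=> [[h1 h2]|h] e1 e2.
  by left; split; [exact: (leT_trans h1 (eqT_le e1))|exact: (leT_trans h2 (eqT_le e2))].
by right; exact: (eqT_trans (eqT_sym e1) (eqT_trans h e2)).
Qed.

Lemma truncT_sym L X Y : truncT L X Y -> truncT L Y X.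
Proof. by move=> [[h1 h2]|h]; [left|right; exact: eqT_sym]. Qed.

Lemma truncT_trans L X Y Z : truncT L X Y -> truncT L Y Z -> truncT L X Z.
Proof.
move=> [[h1 h2]|h] [[h3 h4]|h'].
- by left.
- by left; split => //; exact: (leT_trans h2 (eqT_le h')).
- by left; split => //; exact: (leT_trans h3 (eqT_le (eqT_sym h))).
- by right; exact: (eqT_trans h h').
Qed.

Lemma truncT_mono L K X Y : leT L K -> truncT K X Y -> truncT L X Y.
Proof. by move=> lk [[h1 h2]|h]; [left; split; [exact: (leT_trans lk h1)|exact: (leT_trans lk h2)]|right]. Qed.

Lemma leT_inh L X : inhabited L -> leT L X -> inhabited X.
Proof. by move=> [l] [f _]; exact: (inhabits (f l)). Qed.

Lemma truncT_inh L X Y : inhabited L -> truncT L X Y -> (inhabited X <-> inhabited Y).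
Proof.
move=> iL [[h1 h2]|[f [_ fs]]].
  by split=> _; [exact: (leT_inh iL h2)|exact: (leT_inh iL h1)].
split=> -[x]; first exact: (inhabits (f x)).
by have [y _] := fs x; exact: (inhabits y).
Qed.

Lemma truncT_prod L A' A B' B : inhabited L ->
  truncT L A' A -> truncT L B' B -> truncT L (A' * B') (A * B).
Proof.
move=> iL hA hB.
have eA := truncT_inh iL hA; have eB := truncT_inh iL hB.
have empty_case : ~ inhabited (A * B) -> truncT L (A' * B') (A * B).
  move=> nAB; right.
  have nA'B' : ~ inhabited (A' * B').
    move=> [[a b]]; apply: nAB.
    have [a0] := (proj1 eA) (inhabits a); have [b0] := (proj1 eB) (inhabits b).
    exact: inhabits (a0, b0).
  exists (fun p => False_rect _ (nA'B' (inhabits p))); split.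
    by move=> p; case: (nA'B' (inhabits p)).
  by move=> p; case: (nAB (inhabits p)).
have [iAB|] := pselect (inhabited (A * B)); last exact: empty_case.
have [[a b]] := iAB.
have [a'] := (proj2 eA) (inhabits a); have [b'] := (proj2 eB) (inhabits b).
case: hA => [[hA1 hA2]|[f [fi fs]]].
  left; split.
    case: hA1 => g gi; exists (fun l => (g l, b')) => x y [] /gi; exact.
  case: hA2 => g gi; exists (fun l => (g l, b)) => x y [] /gi; exact.
case: hB => [[hB1 hB2]|[g [gi gs]]].
  left; split.
    case: hB1 => h hi; exists (fun l => (a', h l)) => x y [] /hi; exact.
  case: hB2 => h hi; exists (fun l => (a, h l)) => x y [] /hi; exact.
right; exists (fun p => (f p.1, g p.2)); split.
  by move=> [x1 y1] [x2 y2] [] /fi -> /gi ->.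
move=> [x y]; have [x0 <-] := fs x; have [y0 <-] := gs y; by exists (x0, y0).
Qed.

Lemma truncT_sum L (I : Type) (F' F : I -> Type) :
  (forall i, truncT L (F' i) (F i)) -> truncT L {i & F' i} {i & F i}.
Proof.
move=> h.
have [[i [[h1 h2] _]]|] := pselect (exists i, (leT L (F' i) /\ leT L (F i)) /\ True).
  left; split.
    case: h1 => f fi; exists (fun l => existT _ i (f l)) => x y e; apply: fi; exact: (inj_pair2 _ _ _ _ _ e).
  case: h2 => f fi; exists (fun l => existT _ i (f l)) => x y e; apply: fi; exact: (inj_pair2 _ _ _ _ _ e).
move=> nh; right.
have he : forall i, eqT (F' i) (F i).
  move=> i; case: (h i) => // hi; exfalso; apply: nh; by exists i.
pose f i := proj1_sig (cid (he i)).
have fi i : injective (f i) := proj1 (proj2_sig (cid (he i))).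
have fs i : forall y, exists x, f i x = y := proj2 (proj2_sig (cid (he i))).
exists (fun p => existT _ (projT1 p) (f (projT1 p) (projT2 p))); split.
  move=> [i x] [j y] /= e.
  have ij : i = j by exact: (congr1 (@projT1 _ _) e).
  subst j; congr existT; apply: (fi i); exact: inj_pair2 e.
move=> [i y]; have [x <-] := fs i y; by exists (existT _ i x).
Qed.

Lemma factor T (L a : set T) : truncT {x | L x} {x | Phi L a x} {x | a x}.
Proof.
rewrite /Phi; case: pselect => h; first by right; exact: eqT_refl.
left; split; first exact: leT_refl.
have [//|hle] := leT_total {x | L x} {x | a x}.
exfalso; apply: h; apply/card_le_leT.
exact: (leT_trans (eqT_le (eqT_set_sig a)) (leT_trans hle (eqT_le (eqT_sym (eqT_set_sig L))))).
Qed.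

Lemma trunc_to T U V (K : set T) (X : set U) (Y : set V) :
  card_eq_trunc K X Y -> truncT K X Y.
Proof.
by move=> [[/card_le_leT h1 /card_le_leT h2]|/card_eq_eqT h]; [left|right].
Qed.

Lemma trunc_of T U V (K : set T) (X : set U) (Y : set V) :
  truncT K X Y -> card_eq_trunc K X Y.
Proof.
by move=> [[h1 h2]|h]; [left; split; apply/card_le_leT|right; apply/card_eq_eqT].
Qed.

Unset Implicit Arguments.
Theorem proposition11 (T S : Type) (L K : set T) (mu : S -> S -> S -> set T) :
  L != set0 ->
  L #<= K -> ~ (K #<= L) ->
  is_multisemigroup K mu ->
  is_multisemigroup L (fun s t x => Phi L (mu s t x)).
Proof.
move=> /set0P [l0 Ll0] LK _ [iS [bnd assoc]].
split => //; split.
  move=> s t x; rewrite /Phi; case: pselect => // _; exact: card_lexx.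
move=> r s t x.
have iL : inhabited {x | L x} by exact: (inhabits (exist _ l0 Ll0)).
have e1 : eqT (set_type L) {x | L x} := eqT_set_sig L.
have LKt : leT {x | L x} (set_type K).
  exact: (leT_trans (eqT_le (eqT_sym e1)) (proj1 (card_le_leT L K) LK)).
apply: trunc_of.
apply: (truncT_mono (eqT_le e1)).
apply: (truncT_eqT _ (eqT_sym (eqT_setT _)) (eqT_sym (eqT_setT _))).
have H := trunc_to (assoc r s t x).
have {}H := truncT_eqT H (eqT_setT _) (eqT_setT _).
have {}H := truncT_mono LKt H.
apply: (truncT_trans _ (truncT_trans H _)).
  apply: truncT_sum => i; apply: truncT_prod => //; exact: factor.
apply: truncT_sym; apply: truncT_sum => j; apply: truncT_prod => //; exact: factor.
Qed.
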